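(* For a vertex-colored graph $(G,\sigma)$ whose coloring uses exactly two colors, the following are equivalent: (1) $(G,\sigma)$ is a $2$-RBMG; (2) $(G,\sigma)$ is a properly $2$-colored bicluster graph containing at least one edge; (3) $(G,\sigma)$ is a $2$-RBMG and an orthology graph; (4) $(G,\sigma)$ is a $2$-hc-cograph.
   Context: All graphs are finite, simple and undirected. A vertex coloring is a surjective map $\sigma:V\to S$; $(G,\sigma)$ is properly colored if adjacent vertices receive distinct colors. A phylogenetic tree $T$ on $L$ is a rooted tree with root $\rho_T$ and leaf set $L$ whose inner vertices other than the root have degree at least three; $u\preceq_T v$ means $v$ lies on the path from the root to $u$, and $\mathrm{lca}_T$ denotes last common ancestor. For a surjective leaf coloring $\sigma:L\to S$, a leaf $y$ is a best match of $x$ if $\sigma(x)\neq\sigma(y)$ and $\mathrm{lca}_T(x,y)\preceq_T\mathrm{lca}_T(x,y')$ for all $y'$ with $\sigma(y')=\sigma(y)$; reciprocal best matches are pairs each a best match of the other; $G(T,\sigma)$ is the graph on $L$ with edges the reciprocal best matches. A properly colored $(G,\sigma)$ is an RBMG if $G(T,\sigma)=(G,\sigma)$ for some leaf-colored tree $(T,\sigma)$; it is an $n$-RBMG if moreover $|\sigma(V)|=n$. A graph $G$ is an orthology graph if there is a phylogenetic tree $T$ on $V(G)$ with inner-vertex labeling $t:V^0(T)\to\{0,1\}$ such that $xy\in E(G)$ iff $t(\mathrm{lca}_T(x,y))=1$. For colored vertex-disjoint graphs, their join/disjoint union carry the combined coloring. A colored graph $(G,\sigma)$ is a hierarchically colored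 cograph (hc-cograph) if (K1) it is a single colored vertex, or (K2) $(G,\sigma)=(H,\sigma_H)\Join(H',\sigma_{H'})$ (join: disjoint union plus all edges between $V(H)$ and $V(H')$) with $\sigma(V(H))\cap\sigma(V(H'))=\emptyset$, or (K3) $(G,\sigma)=(H,\sigma_H)\,\dot\cup\,(H',\sigma_{H'})$ with $\sigma(V(H))\cap\sigma(V(H'))\in\{\sigma(V(H)),\sigma(V(H'))\}$, where in (K2),(K3) both $(H,\sigma_H),(H',\sigma_{H'})$ are hc-cographs; an $n$-hc-cograph is one using exactly $n$ colors. A biclique is either $K_1$ or a complete bipartite graph; a bicluster graph is a graph whose connected components are bicliques. *)

(* Defs.v *)
From mathcomp Require Import all_boot.
Set Implicit Arguments. Unset Strict Implicit. Unset Printing Implicit Defensive.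

(* A finite simple graph on a finType V is a symmetric irreflexive e : rel V.
   A vertex coloring is sigma : V -> S (S a finType). *)

Definition ncolors (V S : finType) (sigma : V -> S) : nat :=
  #|[set sigma x | x : V]|.

Definition properly_colored (V S : finType) (e : rel V) (sigma : V -> S) : Prop :=
  forall x y, e x y -> sigma x <> sigma y.

(* A rooted tree on leaf set L: vertex type, root, parent map (par root = root),
   and the embedding of the leaf set L into the vertices. *)
Record ptree (L : finType) := PTree {
  pt_vtx  : finType;
  pt_root : pt_vtx;
  pt_par  : pt_vtx -> pt_vtx;
  pt_leaf : L -> pt_vtx }.
Arguments pt_vtx {L} p.
Arguments pt_root {L} p.
Arguments pt_par {L} p _.
Arguments pt_leaf {L} p _.

Definition anc (T : finType) (par : T -> T) (u v : T) : Prop :=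
  exists k, iter k par u = v.

Definition is_leafv (T : finType) (root : T) (par : T -> T) (v : T) : Prop :=
  forall u, u <> root -> par u <> v.

(* Phylogenetic tree on L: a rooted tree whose leaf set is (the injective
   image of) L and whose inner vertices other than the root have degree >= 3,
   i.e. at least two children. *)
Definition is_phylo (L : finType) (T : ptree L) : Prop :=
  let par := pt_par T in let root := pt_root T in
  [/\ par root = root,
      (forall v, anc par v root),
      injective (pt_leaf T),
      (forall v, is_leafv root par v <-> exists x, pt_leaf T x = v) &
      (forall v, v <> root -> ~ is_leafv root par v ->
         exists u1 u2, [/\ u1 <> u2, u1 <> root, u2 <> root, par u1 = v & par u2 = v])].

Definition is_lca (T : finType) (par : T -> T) (x y z : T) : Prop :=
  [/\ anc par x z, anc par y z &
      forall w, anc par x w -> anc par y w -> anc par z w].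

Definition best_match (L S : finType) (T : ptree L) (sigma : L -> S) (x y : L) : Prop :=
  sigma x <> sigma y /\
  forall y' z z', sigma y' = sigma y ->
    is_lca (pt_par T) (pt_leaf T x) (pt_leaf T y) z ->
    is_lca (pt_par T) (pt_leaf T x) (pt_leaf T y') z' ->
    anc (pt_par T) z z'.

Definition rbm (L S : finType) (T : ptree L) (sigma : L -> S) (x y : L) : Prop :=
  best_match T sigma x y /\ best_match T sigma y x.

Definition RBMG (V S : finType) (e : rel V) (sigma : V -> S) : Prop :=
  properly_colored e sigma /\
  exists T : ptree V, is_phylo T /\ forall x y, e x y <-> rbm T sigma x y.

Definition nRBMG (n : nat) (V S : finType) (e : rel V) (sigma : V -> S) : Prop :=
  RBMG e sigma /\ ncolors sigma = n.

Definition orthology_graph (V : finType) (e : rel V) : Prop :=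
  exists (T : ptree V) (t : pt_vtx T -> bool), is_phylo T /\
    forall x y, x <> y ->
      (e x y <-> forall z, is_lca (pt_par T) (pt_leaf T x) (pt_leaf T y) z -> t z).

Definition is_biclique (V : finType) (e : rel V) (C : {set V}) : Prop :=
  #|C| = 1 \/
  exists A B : {set V},
    [/\ A :&: B = set0, A :|: B = C, A != set0, B != set0 &
        forall x y, x \in C -> y \in C ->
          (e x y <-> (x \in A /\ y \in B) \/ (x \in B /\ y \in A))].

Definition bicluster (V : finType) (e : rel V) : Prop :=
  forall x, is_biclique e [set y | connect e x y].

(* hc e sigma W : the induced colored subgraph (G[W], sigma|W) is an hc-cograph.
   (Any decomposition of a graph as a join / disjoint union is into induced
   subgraphs, so working with vertex subsets of the fixed graph is faithful.) *)
Inductive hc (V S : finType) (e : rel V) (sigma : V -> S) : {set V} -> Prop :=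
| hc_K1 x : hc e sigma [set x]
| hc_join W1 W2 : hc e sigma W1 -> hc e sigma W2 -> W1 :&: W2 = set0 ->
    (sigma @: W1) :&: (sigma @: W2) = set0 ->
    (forall x y, x \in W1 -> y \in W2 -> e x y) ->
    hc e sigma (W1 :|: W2)
| hc_union W1 W2 : hc e sigma W1 -> hc e sigma W2 -> W1 :&: W2 = set0 ->
    ((sigma @: W1) :&: (sigma @: W2) = sigma @: W1 \/
     (sigma @: W1) :&: (sigma @: W2) = sigma @: W2) ->
    (forall x y, x \in W1 -> y \in W2 -> ~~ e x y) ->
    hc e sigma (W1 :|: W2).

Definition n_hc_cograph (n : nat) (V S : finType) (e : rel V) (sigma : V -> S) : Prop :=
  hc e sigma [set: V] /\ ncolors sigma = n.

(* Main.v *)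
Require Import Defs.
From mathcomp Require Import all_boot zify.
From Stdlib Require Import Classical ClassicalEpsilon.
Set Implicit Arguments. Unset Strict Implicit. Unset Printing Implicit Defensive.


Section Hier.
Variable V : finType.
Variable H : {set {set V}}.
Hypothesis hT : setT \in H.
Hypothesis h1 : forall x, [set x] \in H.
Hypothesis h0 : set0 \notin H.
Hypothesis hlam : forall C D, C \in H -> D \in H ->
  [|| C \subset D, D \subset C | [disjoint C & D]].

Definition HT : finType := {C : {set V} | C \in H}.
Definition hroot : HT := exist _ setT hT.
Definition hleaf x : HT := exist _ [set x] (h1 x).
Definition hpar (C : HT) : HT :=
  if val C == setT then C else [arg min_(D < hroot | val C \proper val D) #|val D|].
Definition hptree := @PTree V HT hroot hpar hleaf.

Lemma hne (C : HT) : exists x, x \in val C.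
Proof.
have: val C != set0 by apply: contraNneq h0 => <-; exact: valP.
by case/set0Pn => x; exists x.
Qed.

Lemma hlamT (C D : HT) :
  [\/ val C \subset val D, val D \subset val C | [disjoint val C & val D]].
Proof.
by case/or3P: (hlam (valP C) (valP D)) => h; [apply: Or31|apply: Or32|apply: Or33].
Qed.

Lemma hparP (C : HT) : val C != setT ->
  val C \proper val (hpar C) /\
  forall D : HT, val C \proper val D -> val (hpar C) \subset val D.
Proof.
move=> nT; rewrite /hpar (negbTE nT).
have P0 : val C \proper val hroot by rewrite /= properT.
case: arg_minnP => // P hP Pmin; split=> // D hD.
case: (hlamT P D) => [//|sub|dis].
- have := Pmin D hD => le.
  have /eqP -> //: val D == val P by rewrite eqEcard sub le.
- have [x xC] := hne C.
  have xP : x \in val P by apply: (subsetP (proper_sub hP)).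
  have xD : x \in val D by apply: (subsetP (proper_sub hD)).
  by rewrite (disjointFr dis xP) in xD.
Qed.

Lemma hpar_sub (C : HT) : val C \subset val (hpar C).
Proof.
case: (eqVneq (val C) setT) => [E|nT].
  by rewrite /hpar E eqxx E.
by case: (hparP nT) => /proper_sub.
Qed.

Lemma hancP u v : anc hpar u v <-> val u \subset val v.
Proof.
split.
  case=> k <-; elim: k => [|k IH] //=.
  exact: subset_trans IH (hpar_sub _).
suff: forall n (u : HT), #|V| - #|val u| < n -> val u \subset val v -> anc hpar u v.
  by move=> /(_ (#|V| - #|val u|).+1 u); apply.
elim=> [//|n IH] {}u lt sub.
case: (eqVneq (val u) (val v)) => [E|NE].
  by exists 0; apply: val_inj.
have pr : val u \proper val v by rewrite properEneq NE.
have nT : val u != setT.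
  apply: contraNneq NE => E; rewrite eqEsubset sub E.
  exact: subsetT.
have [pp pmin] := hparP nT.
have [k Ek] : anc hpar (hpar u) v.
  apply: IH; last exact: pmin.
  have c1 := proper_card pp.
  have c2 : #|val (hpar u)| <= #|V| by rewrite -cardsT subset_leq_card ?subsetT.
  have c3 : #|val u| <= #|V| by rewrite -cardsT subset_leq_card ?subsetT.
  rewrite ltnS in lt; apply: leq_trans lt.
  rewrite ltn_sub2l //; exact: leq_trans c1 c2.
by exists k.+1; rewrite iterSr.
Qed.

Lemma hchild (v : HT) x : x \in val v -> val v != [set x] ->
  exists u, [/\ u <> hroot, hpar u = v & x \in val u].
Proof.
move=> xv NE.
pose P := fun u : HT => (x \in val u) && (val u \proper val v).
have P0 : P (hleaf x).
  by rewrite /P /= set11 properEneq eq_sym NE sub1set.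
case: (arg_maxnP (fun u : HT => #|val u|) P0) => u /andP[xu uv] umax.
have nT : val u != setT.
  apply: contraTneq uv => ->; rewrite properE negb_and negbK; apply/orP; right.
  exact: subsetT.
have [pp pmin] := hparP nT.
exists u; split=> //.
  by move=> E; move: nT; rewrite E /= eqxx.
have sub := pmin v uv.
apply: val_inj; apply/eqP; apply: contraT => NE2.
have Pp : P (hpar u).
  by rewrite /P properEneq NE2 sub (subsetP (proper_sub pp)).
have le : #|val (hpar u)| <= #|val u| := umax _ Pp.
by rewrite leqNgt (proper_card pp) in le.
Qed.

Lemma hleafE (v : HT) : is_leafv hroot hpar v <-> exists x, hleaf x = v.
Proof.
split.
  move=> lf; have [x xv] := hne v.
  case: (eqVneq (val v) [set x]) => [E|NE].
    by exists x; apply: val_inj.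
  have [u [ur pu _]] := hchild xv NE.
  by case: (lf u ur pu).
case=> x <- u ur pu.
have nT : val u != setT.
  by apply: contra_not_neq ur => E; apply: val_inj.
have [pp _] := hparP nT.
rewrite pu /= in pp.
have := proper_card pp; rewrite cards1 ltnS leqn0 cards_eq0 => /eqP E.
have: set0 \in H by rewrite -E; exact: valP.
by rewrite (negbTE h0).
Qed.

Lemma hphylo : is_phylo hptree.
Proof.
split => /=.
- by rewrite /hpar /= eqxx.
- by move=> v; apply/hancP; apply: subsetT.
- by move=> x y /(congr1 val) /= /set1_inj.
- exact: hleafE.
move=> v _ nl.
have [x xv] := hne v.
have NE : val v != [set x].
  apply/negP => /eqP E; apply: nl; apply/hleafE; exists x; exact: val_inj.
have [u1 [u1r pu1 xu1]] := hchild xv NE.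
have nT : val u1 != setT.
  by apply: contra_not_neq u1r => E; apply: val_inj.
have [pp _] := hparP nT; rewrite pu1 in pp.
case/properP: pp => _ [y yv yu1].
have NE2 : val v != [set y].
  apply/negP => /eqP E; move: xv; rewrite E inE => /eqP Exy.
  by rewrite -Exy xu1 in yu1.
have [u2 [u2r pu2 yu2]] := hchild yv NE2.
exists u1, u2; split=> //.
by move=> E; rewrite E yu2 in yu1.
Qed.

Lemma hlcaP x y (z : HT) : is_lca hpar (hleaf x) (hleaf y) z <->
  [/\ x \in val z, y \in val z &
      forall C, C \in H -> x \in C -> y \in C -> val z \subset C].
Proof.
have aP : forall w (u : HT), anc hpar (hleaf w) u <-> w \in val u.
  by move=> w u; rewrite -sub1set; exact: hancP.
split.
  case=> /aP xz /aP yz m; split=> // C CH xC yC.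
  by apply/(hancP _ (exist _ C CH)); apply: m; apply/aP.
case=> xz yz m; split; try exact/aP.
move=> w /aP xw /aP yw; apply/hancP; apply: m => //; exact: valP.
Qed.

Lemma hlca_ex x y : exists z, is_lca hpar (hleaf x) (hleaf y) z.
Proof.
pose P := fun u : HT => (x \in val u) && (y \in val u).
have P0 : P hroot by rewrite /P /= !inE.
case: (arg_minnP (fun u : HT => #|val u|) P0) => z /andP[xz yz] zmin.
exists z; apply/hlcaP; split=> // C CH xC yC.
case: (hlamT z (exist _ C CH)) => /= [//|sub|dis].
- have := zmin (exist _ C CH); rewrite /P /= xC yC => /(_ isT) le.
  by have /eqP -> : C == val z by rewrite eqEcard sub le.
- by rewrite (disjointFr dis xz) in xC.
Qed.

Lemma hbmP (S : finType) (sigma : V -> S) x y :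
  best_match hptree sigma x y <->
  sigma x <> sigma y /\ forall y' C, C \in H -> sigma y' = sigma y ->
     x \in C -> y' \in C -> y \in C.
Proof.
rewrite /best_match /=; split.
  case=> ne m; split=> // y' C CH sy xC y'C.
  have [z /[dup] zl /hlcaP [xz yz zm]] := hlca_ex x y.
  have [z' /[dup] zl' /hlcaP [xz' yz' zm']] := hlca_ex x y'.
  have /hancP sub := m y' z z' sy zl zl'.
  exact: (subsetP (zm' _ CH xC y'C)) (subsetP sub _ yz).
case=> ne m; split=> // y' z z' sy /hlcaP [xz yz zm] /hlcaP [xz' yz' zm'].
apply/hancP; apply: zm => //; first exact: valP.
exact: (m y' _ (valP z')).
Qed.

End Hier.

Lemma ex_min_nat (P : nat -> Prop) : (exists n, P n) ->
  exists n, P n /\ forall m, P m -> n <= m.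
Proof.
case=> n; elim: n {-2}n (leqnn n) => [|N IH] n le Pn.
  exists n; split=> // m _; by move: le; rewrite leqn0 => /eqP ->.
case: (classic (exists m, m < n /\ P m)) => [[m [lt Pm]]|nex].
  apply: (IH m) => //; by rewrite -ltnS (leq_trans lt).
exists n; split=> // m Pm; rewrite leqNgt; apply/negP => lt.
by apply: nex; exists m.
Qed.

Section Tree.
Variable T : finType.
Variable par : T -> T.
Variable root : T.
Hypothesis hroot : par root = root.
Hypothesis hall : forall v, anc par v root.

Lemma anc_refl u : anc par u u. Proof. by exists 0. Qed.
Lemma anc_trans u v w : anc par u v -> anc par v w -> anc par u w.
Proof. by case=> k <- [m <-]; exists (m + k); rewrite iterD. Qed.

Lemma iter_mul_fix p u : iter p par u = u -> forall j, iter (j * p) par u = u.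
Proof. by move=> h; elim=> [//|j IH]; rewrite mulSn iterD IH h. Qed.

Lemma anc_antisym u v : anc par u v -> anc par v u -> u = v.
Proof.
case=> k Ek [m Em].
have cyc : iter (m + k) par u = u by rewrite iterD Ek.
case: (posnP (m + k)) => [z|pos].
  by move/eqP: z; rewrite addn_eq0 => /andP[_ /eqP k0]; rewrite -Ek k0.
have [n En] := hall u.
have ur : u = root.
  rewrite -(iter_mul_fix cyc n).
  have le : n <= n * (m + k) by rewrite leq_pmulr.
  by rewrite -(subnK le) iterD En iter_fix.
by rewrite -Ek ur iter_fix.
Qed.

Lemma anc_chain x v w : anc par x v -> anc par x w -> anc par v w \/ anc par w v.
Proof.
case=> k <- [m <-].
case: (leqP k m) => le.
  by left; exists (m - k); rewrite -iterD subnK.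
by right; exists (k - m); rewrite -iterD subnK // ltnW.
Qed.

Lemma lca_ex x y : exists z, is_lca par x y z.
Proof.
have [k [[m Em] kmin]] := @ex_min_nat (fun k => anc par y (iter k par x))
  (let: ex_intro n En := hall x in ex_intro _ n (eq_ind_r _ (hall y) En)).
exists (iter k par x); split; first by exists k.
  by exists m.
move=> w [j <-] yw.
have le := kmin _ yw.
by exists (j - k); rewrite -iterD subnK.
Qed.

Lemma lca_uniq x y z z' : is_lca par x y z -> is_lca par x y z' -> z = z'.
Proof.
case=> xz yz m [xz' yz' m']; apply: anc_antisym; [exact: m|exact: m'].
Qed.

Lemma lca_sym x y z : is_lca par x y z -> is_lca par y x z.
Proof. by case=> a b c; split=> // w h1 h2; exact: c. Qed.

Definition ancb u v : bool :=
  if excluded_middle_informative (anc par u v) then true else false.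
Lemma ancbP u v : reflect (anc par u v) (ancb u v).
Proof. by rewrite /ancb; case: excluded_middle_informative => h; constructor. Qed.

Definition ancset z := [set w | ancb z w].

Lemma ancset_lt z z' : anc par z' z -> z' <> z -> #|ancset z| < #|ancset z'|.
Proof.
move=> a ne; apply: proper_card; apply/properP; split.
  apply/subsetP => w; rewrite !inE => /ancbP h; apply/ancbP; exact: anc_trans a h.
exists z'; first by rewrite inE; apply/ancbP; exact: anc_refl.
by rewrite inE; apply/ancbP => h; apply: ne; exact: anc_antisym.
Qed.

End Tree.

Definition Qp (V : finType) (e : rel V) :=
  forall x y z w, e x y -> e y z -> e z w -> e x w.
Definition ccomp (V : finType) (e : rel V) x := [set y | connect e x y].
Definition isol (V : finType) (e : rel V) x := [forall w, ~~ e x w].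

Section Graph.
Variables (V S : finType) (e : rel V) (sigma : V -> S).
Hypothesis esym : symmetric e.
Hypothesis eirr : irreflexive e.
Hypothesis col2 : ncolors sigma = 2.

Lemma colsE : [set sigma x | x : V] = sigma @: setT.
Proof. by apply/setP => c; apply/imsetP/imsetP => -[x _ ->]; exists x. Qed.

Lemma two_col x y z : sigma x <> sigma y -> sigma z = sigma x \/ sigma z = sigma y.
Proof.
move=> ne.
have sub : [set sigma x; sigma y] \subset [set sigma x | x : V].
  by apply/subsetP => c; rewrite !inE => /orP[]/eqP->; apply: imset_f.
have : [set sigma x; sigma y] == [set sigma x | x : V].
  rewrite eqEcard sub /= cards2; move: col2; rewrite /ncolors => ->.
  by case: eqP.
move/eqP => E.
have : sigma z \in [set sigma x; sigma y] by rewrite E; apply: imset_f.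
by rewrite !inE => /orP[]/eqP; [left|right].
Qed.

Lemma csym : connect_sym e. Proof. exact: sym_connect_sym. Qed.

Lemma isol_connect x y : isol e x -> connect e x y -> y = x.
Proof.
move=> /forallP iso /connectP [[|a p] pth ->] //=.
by move: pth => /= /andP[h _]; move: (iso a); rewrite h.
Qed.

Lemma isol_comp x : isol e x -> ccomp e x = [set x].
Proof.
move=> iso; apply/setP => y; rewrite !inE; apply/idP/idP.
  by move/(isol_connect iso) => ->.
by move/eqP->; exact: connect0.
Qed.

Lemma not_isol x : ~~ isol e x -> exists z, e x z.
Proof. by rewrite negb_forall => /existsP [z]; rewrite negbK; exists z. Qed.

Lemma connect_edge x y z : connect e x y -> e y z -> connect e x z.
Proof. by move=> c h; apply: connect_trans c (connect1 h). Qed.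

Lemma comp_eq x y : connect e x y -> ccomp e x = ccomp e y.
Proof.
move=> c; apply/setP => w; rewrite !inE; apply/idP/idP => h.
  by apply: connect_trans h; rewrite csym.
exact: connect_trans c h.
Qed.

Lemma comp_disj x y : ~~ connect e x y -> [disjoint ccomp e x & ccomp e y].
Proof.
move=> nc; apply/pred0P => w /=; rewrite !inE; apply/negP => /andP[a b].
by move/negP: nc; apply; apply: connect_trans a _; rewrite csym.
Qed.

Section PQ.
Hypothesis prop : properly_colored e sigma.
Hypothesis hQ : Qp e.

Lemma Lconn x y : connect e x y -> sigma x <> sigma y -> e x y.
Proof.
move=> c ne.
case: (boolP (isol e x)) => [iso|/not_isol [z0 ez0]].
  by move: ne; rewrite (isol_connect iso c).
pose Inv y := (sigma y <> sigma x -> e x y) /\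
              (sigma y = sigma x -> forall z, e x z -> e y z).
have step : forall c a, Inv c -> e c a -> Inv a.
  move=> c' a [h1 h2] eca.
  have nca := prop eca.
  case: (eqVneq (sigma c') (sigma x)) => [E|NE].
    have exz := h2 E z0 ez0.
    split=> [_|E2]; last by case: nca; rewrite E2 E.
    have ez0c : e z0 c' by rewrite esym.
    exact: hQ ez0 ez0c eca.
  have NE' : sigma c' <> sigma x by apply/eqP.
  have ex := h1 NE'.
  case: (@two_col c' x a NE') => [E|E]; first by case: nca.
  split=> [//|_ z exz].
  have h3 : e a c' by rewrite esym.
  have h4 : e c' x by rewrite esym.
  exact: hQ h3 h4 exz.
have inv0 : Inv x by split.
have gen : forall p c0, Inv c0 -> path e c0 p -> Inv (last c0 p).
  by elim=> [//|a p IH] c0 ic /= /andP[h pth]; exact: IH (step _ _ ic h) pth.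
case/connectP: c => p pth Ey.
have := gen p x inv0 pth; rewrite -Ey.
by case=> h _; apply: h => E; apply: ne.
Qed.


Lemma bic_of_Q : bicluster e.
Proof.
move=> x; rewrite /is_biclique.
case: (boolP (isol e x)) => [iso|/not_isol [z0 ez0]].
  by left; have := isol_comp iso; rewrite /ccomp => ->; rewrite cards1.
right.
exists ([set y | connect e x y] :&: [set v | sigma v == sigma x]),
       ([set y | connect e x y] :&: [set v | sigma v != sigma x]).
split.
- by apply/setP => v; rewrite !inE; case: (connect e x v); case: (sigma v == sigma x).
- by apply/setP => v; rewrite !inE; case: (connect e x v); case: (sigma v == sigma x).
- by apply/set0Pn; exists x; rewrite !inE connect0 eqxx.
- apply/set0Pn; exists z0; rewrite !inE connect1 //=.
  by apply/eqP => E; apply: (prop ez0).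
move=> u v; rewrite !inE => cu cv.
have cuv : connect e u v by apply: connect_trans cv; rewrite csym.
split.
  move=> euv; have ne := prop euv.
  rewrite cu cv /=.
  case: (eqVneq (sigma u) (sigma x)) => [E|NE].
    by left; split=> //; apply/eqP => E2; apply: ne; rewrite E E2.
  right; split=> //.
  have NE' : sigma u <> sigma x by apply/eqP.
  case: (@two_col u x v NE') => E; first by case: ne.
  by rewrite E.
case=> [[/andP[_ /eqP E1] /andP[_ E2]]|[/andP[_ E1] /andP[_ /eqP E2]]];
  apply: Lconn => //.
  by rewrite E1 => E; move: E2; rewrite -E eqxx.
by rewrite E2 => E; move: E1; rewrite E eqxx.
Qed.

End PQ.

Lemma Q_of_bic : bicluster e -> Qp e.
Proof.
move=> bic x y z w exy eyz ezw.
have cy : connect e x y by apply: connect1.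
have cz : connect e x z by apply: connect_edge eyz.
have cw : connect e x w by apply: connect_edge ezw.
case: (bic x) => [c1|[A [B [dis un _ _ hb]]]].
  move/eqP: c1 => /cards1P [a Ea].
  have : x \in [set a] by rewrite -Ea inE connect0.
  have : y \in [set a] by rewrite -Ea inE.
  rewrite !inE => /eqP ya /eqP xa; by rewrite ya xa eirr in exy.
have inC : forall v, connect e x v -> v \in [set y | connect e x y] by move=> v; rewrite inE.
have x0 := inC _ (connect0 e x).
have nAB : forall v, v \in A -> v \in B -> False.
  move=> v vA vB; have : v \in A :&: B by rewrite inE vA vB.
  by rewrite dis inE.
have h1 := (hb x y x0 (inC _ cy)).1 exy.
have h2 := (hb y z (inC _ cy) (inC _ cz)).1 eyz.
have h3 := (hb z w (inC _ cz) (inC _ cw)).1 ezw.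
apply/(hb x w x0 (inC _ cw)).
case: h1 => [[xA yB]|[xB yA]]; case: h2 => [[yA' zB]|[yB' zA]];
  case: h3 => [[zA' wB]|[zB' wA]];
  try solve [exfalso; apply: (nAB y); done | exfalso; apply: (nAB z); done];
  by [left | right].
Qed.


Lemma hc_ne W : hc e sigma W -> exists x, x \in W.
Proof.
elim=> [x|W1 W2 _ [x xW] _ _ _ _ _|W1 W2 _ [x xW] _ _ _ _ _]; exists x;
  by rewrite ?inE ?xW.
Qed.

Lemma hc_inv W : hc e sigma W ->
  [/\ (forall x y, x \in W -> y \in W -> e x y -> sigma x <> sigma y),
      (forall x y z w, x \in W -> y \in W -> z \in W -> w \in W ->
          e x y -> e y z -> e z w -> e x w) &
      (1 < #|sigma @: W| -> exists x y, [/\ x \in W, y \in W & e x y])].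
Proof.
elim=> [x|W1 W2 hc1 [P11 P12 P13] hc2 [P21 P22 P23] dis cdis cross
        |W1 W2 hc1 [P11 P12 P13] hc2 [P21 P22 P23] dis cnest ncross].
- split.
  + by move=> a b; rewrite !inE => /eqP -> /eqP ->; rewrite eirr.
  + by move=> a b c d; rewrite !inE => /eqP -> /eqP ->; rewrite eirr.
  + by rewrite imset_set1 cards1.
- have [x1 x1W] := hc_ne hc1; have [x2 x2W] := hc_ne hc2.
  have cd : forall u v, u \in W1 -> v \in W2 -> sigma u <> sigma v.
    move=> u v uW vW E.
    have : sigma u \in (sigma @: W1) :&: (sigma @: W2).
      by rewrite inE imset_f // E imset_f.
    by rewrite cdis inE.
  have mono1 : forall u v, u \in W1 -> v \in W1 -> sigma u = sigma v.
    move=> u v uW vW; case: (@two_col u x2 v (cd _ _ uW x2W)) => // E.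
    by case: (cd _ _ vW x2W).
  have mono2 : forall u v, u \in W2 -> v \in W2 -> sigma u = sigma v.
    move=> u v uW vW; case: (@two_col x1 u v (cd _ _ x1W uW)) => E.
      by case: (cd _ _ x1W vW); rewrite E.
    by [].
  have ne1 : forall u v, u \in W1 -> v \in W1 -> ~~ e u v.
    by move=> u v uW vW; apply/negP => h; apply: (P11 _ _ uW vW h); exact: mono1.
  have ne2 : forall u v, u \in W2 -> v \in W2 -> ~~ e u v.
    by move=> u v uW vW; apply/negP => h; apply: (P21 _ _ uW vW h); exact: mono2.
  have cr : forall u v, u \in W2 -> v \in W1 -> e u v.
    by move=> u v uW vW; rewrite esym; apply: cross.
  split.
  + move=> a b; rewrite !inE => /orP[]aW /orP[]bW.
    * by move=> h; move: (ne1 _ _ aW bW); rewrite h.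
    * by move=> _; exact: cd.
    * by move=> _ E; apply: (cd _ _ bW aW); rewrite E.
    * by move=> h; move: (ne2 _ _ aW bW); rewrite h.
  + move=> a b c d; rewrite !inE => /orP[]aW /orP[]bW /orP[]cW /orP[]dW;
    move=> hab hbc hcd;
    try solve [by move: (ne1 _ _ aW bW); rewrite hab | by move: (ne2 _ _ aW bW); rewrite hab
              | by move: (ne1 _ _ bW cW); rewrite hbc | by move: (ne2 _ _ bW cW); rewrite hbc
              | by move: (ne1 _ _ cW dW); rewrite hcd | by move: (ne2 _ _ cW dW); rewrite hcd];
    by [apply: cross | apply: cr].
  + by move=> _; exists x1, x2; rewrite !inE x1W x2W orbT; split=> //; apply: cross.
- have nc : forall u v, u \in W1 -> v \in W2 -> e u v -> False.
    by move=> u v uW vW h; move: (ncross _ _ uW vW); rewrite h.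
  have nc' : forall u v, u \in W2 -> v \in W1 -> e u v -> False.
    by move=> u v uW vW h; apply: (nc _ _ vW uW); rewrite esym.
  split.
  + move=> a b; rewrite !inE => /orP[]aW /orP[]bW h.
    * exact: P11.
    * by case: (nc _ _ aW bW h).
    * by case: (nc' _ _ aW bW h).
    * exact: P21.
  + move=> a b c d; rewrite !inE => /orP[]aW /orP[]bW /orP[]cW /orP[]dW;
    move=> hab hbc hcd;
    try solve [case: (nc _ _ aW bW hab) | case: (nc' _ _ aW bW hab)
              | case: (nc _ _ bW cW hbc) | case: (nc' _ _ bW cW hbc)
              | case: (nc _ _ cW dW hcd) | case: (nc' _ _ cW dW hcd)];
    by [apply: (P12 _ _ _ _ aW bW cW dW) | apply: (P22 _ _ _ _ aW bW cW dW)].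
  + rewrite imsetU; case: cnest => E.
      move/setIidPl: E => /setUidPr -> /P23 [a [b [aW bW h]]].
      by exists a, b; rewrite !inE aW bW !orbT.
    rewrite setIC in E; move/setIidPl: E => /setUidPl -> /P13 [a [b [aW bW h]]].
    by exists a, b; rewrite !inE aW bW.
Qed.


Section Build.
Hypothesis prop : properly_colored e sigma.
Hypothesis hQ : Qp e.

Lemma mono_hc W : W != set0 -> (forall u v, u \in W -> v \in W -> sigma u = sigma v) ->
  hc e sigma W.
Proof.
move: W; suff: forall n (W : {set V}), #|W| <= n -> W != set0 ->
    (forall u v, u \in W -> v \in W -> sigma u = sigma v) -> hc e sigma W.
  by move=> h W; apply: h.
elim=> [|n IH] W le ne mono.
  by move: ne; rewrite -cards_eq0; move: le; rewrite leqn0 => ->.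
case/set0Pn: ne => x xW.
case: (eqVneq W [set x]) => [->|NE]; first exact: hc_K1.
have ne2 : W :\ x != set0.
  apply: contraNneq NE => E; rewrite eqEsubset sub1set xW andbT.
  apply/subsetP => y yW; apply: contraT => yx.
  have : y \in W :\ x by rewrite !inE yW andbT; rewrite inE in yx.
  by rewrite E inE.
rewrite -(setD1K xW); apply: hc_union.
- exact: hc_K1.
- apply: IH => //; last by move=> u v; rewrite !inE => /andP[_ uW] /andP[_ vW]; exact: mono.
  by move: le; rewrite (cardsD1 x W) xW add1n ltnS.
- by apply/setP => y; rewrite !inE; case: eqP.
- left; rewrite imset_set1; apply/setIidPl; rewrite sub1set.
  case/set0Pn: ne2 => y yW; rewrite (mono x y xW); first exact: imset_f.
  by move: yW; rewrite !inE => /andP[].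
- move=> a b; rewrite !inE => /eqP -> /andP[_ bW]; apply/negP => h.
  by apply: (prop h); apply: mono.
Qed.

Lemma comp_hc z : ~~ isol e z -> hc e sigma (ccomp e z).
Proof.
case/not_isol => w ezw.
pose A := ccomp e z :&: [set v | sigma v == sigma z].
pose B := ccomp e z :&: [set v | sigma v != sigma z].
have -> : ccomp e z = A :|: B.
  by apply/setP => v; rewrite !inE; case: (connect e z v); case: (sigma v == sigma z).
have wB : w \in B by rewrite !inE connect1 //=; apply/eqP => E; apply: (prop ezw).
apply: hc_join.
- apply: mono_hc; first by apply/set0Pn; exists z; rewrite !inE connect0 eqxx.
  by move=> u v; rewrite !inE => /andP[_ /eqP->] /andP[_ /eqP ->].
- apply: mono_hc; first by apply/set0Pn; exists w.
  move=> u v; rewrite !inE => /andP[_ /eqP nu] /andP[_ /eqP nv].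
  by case: (@two_col u z v nu) => // E; case: nv.
- apply/setP => v; rewrite !inE.
  by case: (connect e z v); case: (sigma v == sigma z).
- apply/setP => c; rewrite !inE; apply/negP => /andP[/imsetP[u uA ->] /imsetP[v vB E]].
  move: uA vB; rewrite !inE => /andP[_ /eqP su] /andP[_ /eqP sv].
  by apply: sv; rewrite -E su.
- move=> u v; rewrite !inE => /andP[cu /eqP su] /andP[cv /eqP sv].
  apply: Lconn => //; first by apply: connect_trans cv; rewrite csym.
  by rewrite su => E; apply: sv.
Qed.

Variables (x0 y0 : V).
Hypothesis exy0 : e x0 y0.

Lemma closed_comp (W : {set V}) z v : (forall u v, u \in W -> e u v -> v \in W) ->
  z \in W -> connect e z v -> v \in W.
Proof.
move=> cl zW /connectP [p pth ->].
by elim: p z zW pth => [//|a p IH] z zW /= /andP[h pth]; apply: IH pth; apply: cl h.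
Qed.

Lemma closed_hc (W : {set V}) : (forall u v, u \in W -> e u v -> v \in W) ->
  ccomp e x0 \subset W -> hc e sigma W.
Proof.
move: W; suff: forall n (W : {set V}), #|W| <= n -> (forall u v, u \in W -> e u v -> v \in W) ->
  ccomp e x0 \subset W -> hc e sigma W by move=> h W; apply: h.
have x0n : ~~ isol e x0 by apply/forallPn; exists y0; rewrite negbK.
elim=> [|n IH] W le cl sub.
  have x0W : x0 \in W by apply: (subsetP sub); rewrite inE connect0.
  by move: le; rewrite leqn0 cards_eq0 => /eqP W0; rewrite W0 inE in x0W.
case: (eqVneq W (ccomp e x0)) => [->|NE]; first exact: comp_hc.
have [z zW zn] : exists2 z, z \in W & z \notin ccomp e x0.
  have : ccomp e x0 \proper W by rewrite properEneq eq_sym NE sub.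
  by case/properP => _ [z zW zn]; exists z.
have czW : ccomp e z \subset W.
  by apply/subsetP => v; rewrite inE; apply: closed_comp.
have cdisj : [disjoint ccomp e x0 & ccomp e z].
  apply: comp_disj; apply: contra zn; rewrite inE.
  done.
have -> : W = (W :\: ccomp e z) :|: ccomp e z by rewrite -{1}(setID W (ccomp e z)) (setIidPr czW) setUC.
have sub' : ccomp e x0 \subset W :\: ccomp e z.
  apply/subsetP => v vc; rewrite inE (subsetP sub _ vc) andbT.
  by apply/negP => vz; move: (disjointFr cdisj vc); rewrite vz.
have x00 : x0 \in ccomp e x0 by rewrite inE connect0.
have y00 : y0 \in ccomp e x0 by rewrite inE connect1.
apply: hc_union.
- apply: IH.
  + have : W :\: ccomp e z \proper W.
      apply/properP; split; first exact: subsetDl.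
      by exists z => //; rewrite !inE connect0.
    by move/proper_card => lt; rewrite -ltnS (leq_trans lt).
  + move=> u v; rewrite !inE => /andP[uz uW] euv; rewrite (cl _ _ uW euv) andbT.
    apply: contra uz => czv; apply: connect_edge czv _; by rewrite esym.
  + exact: sub'.
- case: (boolP (isol e z)) => [iso|ni]; last exact: comp_hc.
  rewrite isol_comp //; exact: hc_K1.
- by apply/setP => v; rewrite !inE; case: (connect e z v); rewrite ?andbF.
- right; apply/setIidPr; apply/subsetP => c /imsetP [u _ ->].
  have ne0 : sigma x0 <> sigma y0 by apply: prop.
  case: (@two_col x0 y0 u ne0) => ->; apply: imset_f; exact: (subsetP sub').
- move=> u v; rewrite !inE => /andP[uz _] czv; apply/negP => euv.
  by move/negP: uz; apply; apply: connect_edge czv _; rewrite esym.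
Qed.

End Build.

End Graph.

Section A.
Variables (V S : finType) (e : rel V) (sigma : V -> S).
Hypothesis esym : symmetric e.
Hypothesis eirr : irreflexive e.
Hypothesis col2 : ncolors sigma = 2.

Lemma rbmg_PQ : RBMG e sigma -> Qp e /\ exists x y, e x y.
Proof.
case=> prop [T [[hr hall _ _ _] iff]].
have tc := two_col col2.
have antis := anc_antisym hr hall.
have lex := lca_ex hall.
split.
  move=> x y z w exy eyz ezw.
  have [bxy byx] := (iff x y).1 exy.
  have [byz bzy] := (iff y z).1 eyz.
  have [bzw bwz] := (iff z w).1 ezw.
  have sxy := prop _ _ exy; have syz := prop _ _ eyz; have szw := prop _ _ ezw.
  have szx : sigma z = sigma x.
    by case: (tc x y z sxy) => // E; case: syz.
  have swy : sigma w = sigma y.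
    case: (tc x y w sxy) => // E; case: szw; by rewrite szx E.
  have [u1 l1] := lex (pt_leaf T x) (pt_leaf T y).
  have [u2 l2] := lex (pt_leaf T y) (pt_leaf T z).
  have [u3 l3] := lex (pt_leaf T z) (pt_leaf T w).
  have e12 : u1 = u2.
    apply: antis.
      exact: (byx.2 z u1 u2 szx (lca_sym l1) l2).
    exact: (byz.2 x u2 u1 (Logic.eq_sym szx) l2 (lca_sym l1)).
  have e23 : u2 = u3.
    apply: antis.
      exact: (bzy.2 w u2 u3 swy (lca_sym l2) l3).
    exact: (bzw.2 y u3 u2 (Logic.eq_sym swy) l3 (lca_sym l2)).
  case: (l1) => xu1 yu1 _; case: (l3) => zu3 wu3 _.
  rewrite -e23 -e12 in zu3 wu3.
  apply/iff; split; split.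
  - by rewrite swy.
  - move=> y' z1 z' sy [_ _ m1] l'.
    apply: anc_trans (m1 _ xu1 wu3) _.
    by apply: (bxy.2 y' u1 z') => //; rewrite sy.
  - by rewrite swy => E; apply: sxy.
  - move=> x' z1 z' sx [_ _ m1] l'.
    apply: anc_trans (m1 _ wu3 xu1) _.
    rewrite e12 e23.
    apply: (bwz.2 x' u3 z'); first by rewrite sx.
      exact: lca_sym l3.
    exact: l'.
pose PP x y z := sigma x <> sigma y /\ is_lca (pt_par T) (pt_leaf T x) (pt_leaf T y) z.
have minP : forall n x y z, #|pt_vtx T| - #|ancset (pt_par T) z| < n -> PP x y z ->
  exists x y z, PP x y z /\ forall x' y' z', PP x' y' z' -> anc (pt_par T) z' z -> z' = z.
  elim=> [//|n IH] x y z lt pz.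
  case: (classic (exists x' y' z', PP x' y' z' /\ anc (pt_par T) z' z /\ z' <> z)).
    case=> x' [y' [z' [pz' [a ne]]]].
    apply: (IH x' y' z') => //.
    have c1 := ancset_lt hr hall a ne.
    have c2 : #|ancset (pt_par T) z'| <= #|pt_vtx T| by apply: max_card.
    lia.
  move=> nex; exists x, y, z; split=> // x' y' z' pz' a.
  case: (classic (z' = z)) => // ne; case: nex; by exists x', y', z'.
have [x [y sxy]] : exists x y, sigma x <> sigma y.
  have : 1 < #|[set sigma x | x : V]| by rewrite -/(ncolors sigma) col2.
  case/card_gt1P => c1 [c2 [/imsetP[x _ ->] /imsetP[y _ ->] ne]].
  by exists x, y; apply/eqP.
have [z lz] := lex (pt_leaf T x) (pt_leaf T y).
have [x1 [y1 [z1 [[s1 l1] m]]]] := minP _ x y z (ltnSn _) (conj sxy lz).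
exists x1, y1; apply/iff; split; split=> //.
- move=> y' za z' sy la l'.
  rewrite -(lca_uniq hr hall l1 la).
  case: l1 => xz1 _ _; case: (l') => xz' _ _.
  case: (anc_chain xz1 xz') => // a.
  rewrite (m x1 y' z') //; first exact: anc_refl.
  by split=> //; rewrite sy.
- by move=> E; apply: s1.
- move=> x' za z' sx la l'.
  rewrite -(lca_uniq hr hall (lca_sym l1) la).
  case: l1 => _ yz1 _; case: (l') => yz' _ _.
  case: (anc_chain yz1 yz') => // a.
  rewrite (m x' y1 z') //; first exact: anc_refl.
  by split; [rewrite sx | exact: lca_sym].
Qed.
End A.

Section Cons.
Variables (V S : finType) (e : rel V) (sigma : V -> S).
Hypothesis esym : symmetric e.
Hypothesis eirr : irreflexive e.
Hypothesis col2 : ncolors sigma = 2.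
Hypothesis prop : properly_colored e sigma.
Hypothesis hQ : Qp e.
Variables (x0 y0 : V).
Hypothesis exy0 : e x0 y0.

Definition cls x := [set v | sigma v == sigma x].
Definition MM := ccomp e x0 :|: [set z | isol e z && (sigma z == sigma x0)].
Definition HH : {set {set V}} := setT |: ([set [set x] | x : V] :|:
  ([set ccomp e x | x : V] :|: ([set ccomp e x :&: cls x | x : V] :|: [set MM]))).

Lemma inHE C : C \in HH -> C = setT \/ (exists x, C = [set x]) \/ (exists x, C = ccomp e x) \/
  (exists x, C = ccomp e x :&: cls x) \/ C = MM.
Proof.
rewrite !inE => /orP[/eqP->|/orP[/imsetP[x _ ->]|/orP[/imsetP[x _ ->]|/orP[/imsetP[x _ ->]|/eqP->]]]].
- by left.
- by right; left; exists x.
- by right; right; left; exists x.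
- by right; right; right; left; exists x.
- by right; right; right; right.
Qed.

Lemma hHT : setT \in HH. Proof. by rewrite !inE eqxx. Qed.
Lemma hH1 x : [set x] \in HH.
Proof. by apply/setU1P; right; apply/setUP; left; apply/imsetP; exists x. Qed.
Lemma hHC x : ccomp e x \in HH.
Proof. by apply/setU1P; right; apply/setUP; right; apply/setUP; left; apply/imsetP; exists x. Qed.
Lemma hHP x : ccomp e x :&: cls x \in HH.
Proof. by apply/setU1P; right; apply/setUP; right; apply/setUP; right; apply/setUP; left; apply/imsetP; exists x. Qed.
Lemma hHM : MM \in HH.
Proof. by apply/setU1P; right; apply/setUP; right; apply/setUP; right; apply/setUP; right; apply/set1P. Qed.

Lemma in_comp x : x \in ccomp e x. Proof. by rewrite inE connect0. Qed.
Lemma in_P x : x \in ccomp e x :&: cls x. Proof. by rewrite !inE connect0 eqxx. Qed.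
Lemma x0M : x0 \in MM. Proof. by rewrite !inE connect0. Qed.
Lemma y0M : y0 \in MM. Proof. by rewrite !inE connect1. Qed.

Lemma hH0 : set0 \notin HH.
Proof.
apply/negP => /inHE [E|[[x E]|[[x E]|[[x E]|E]]]].
- by have := in_setT x0; rewrite -E inE.
- by have := set11 x; rewrite -E inE.
- by have := in_comp x; rewrite -E inE.
- by have := in_P x; rewrite -E inE.
- by have := x0M; rewrite -E inE.
Qed.

Definition lam (C D : {set V}) := [|| C \subset D, D \subset C | [disjoint C & D]].

Lemma lamC C D : lam C D -> lam D C.
Proof. by rewrite /lam disjoint_sym => /or3P[]->; rewrite ?orbT. Qed.
Lemma lam_T D : lam setT D. Proof. by rewrite /lam subsetT orbT. Qed.
Lemma lam_1 x D : lam [set x] D.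
Proof. by rewrite /lam sub1set disjoints1; case: (x \in D); rewrite ?orbT. Qed.
Lemma lam_cc x y : lam (ccomp e x) (ccomp e y).
Proof.
case: (boolP (connect e x y)) => c.
  by rewrite /lam (comp_eq esym c) subxx.
by rewrite /lam comp_disj ?orbT.
Qed.
Lemma lam_cp x y : lam (ccomp e x) (ccomp e y :&: cls y).
Proof.
case: (boolP (connect e x y)) => c.
  by rewrite /lam (comp_eq esym c) subsetIl orbT.
by rewrite /lam (disjointWr (subsetIl _ _) (comp_disj esym c)) ?orbT.
Qed.
Lemma lam_pp x y : lam (ccomp e x :&: cls x) (ccomp e y :&: cls y).
Proof.
case: (boolP (connect e x y)) => c; last first.
  by rewrite /lam (disjointW (subsetIl _ _) (subsetIl _ _) (comp_disj esym c)) ?orbT.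
case: (eqVneq (sigma x) (sigma y)) => E.
  by rewrite /lam (comp_eq esym c) /cls E subxx.
apply/orP; right; apply/orP; right.
apply/pred0P => v /=; rewrite !inE; apply/negP => /andP[/andP[_ /eqP a] /andP[_ /eqP b]].
by move/eqP: E; apply; rewrite -a -b.
Qed.

Lemma cM y : ccomp e y \subset MM \/ [disjoint ccomp e y & MM].
Proof.
case: (boolP (connect e x0 y)) => c.
  by left; rewrite -(comp_eq esym c); apply: subsetUl.
case: (boolP (isol e y && (sigma y == sigma x0))) => [/andP[iso s]|ni].
  by left; rewrite (isol_comp iso) sub1set !inE iso s orbT.
right; apply/pred0P => v /=; rewrite !inE; apply/negP => /andP[cyv /orP[cx|/andP[iso s]]].
  by case/negP: c; apply: connect_trans cx _; rewrite (csym esym).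
have E : y = v by apply: (isol_connect iso); rewrite (csym esym).
by rewrite E iso s in ni.
Qed.

Lemma lam_cM y : lam (ccomp e y) MM.
Proof. by case: (cM y) => h; rewrite /lam h ?orbT. Qed.
Lemma lam_pM y : lam (ccomp e y :&: cls y) MM.
Proof.
case: (cM y) => h.
  by rewrite /lam (subset_trans (subsetIl _ _) h).
by rewrite /lam (disjointWl (subsetIl _ _) h) ?orbT.
Qed.
Lemma lam_MM : lam MM MM. Proof. by rewrite /lam subxx. Qed.

Lemma lamH C D : C \in HH -> D \in HH -> lam C D.
Proof.
move=> /inHE CH /inHE DH.
case: CH => [->|[[x->]|[[x->]|[[x->]|->]]]]; first exact: lam_T; first exact: lam_1;
case: DH => [->|[[y->]|[[y->]|[[y->]|->]]]];
try solve [exact: lamC (lam_T _) | exact: lamC (lam_1 _ _) | exact: lam_cc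
  | exact: lam_cp | exact: lam_pp | exact: lam_cM | exact: lam_pM | exact: lam_MM
  | exact: lamC (lam_cp _ _) | exact: lamC (lam_cM _) | exact: lamC (lam_pM _)].
Qed.

Lemma bm_edge x y : e x y -> sigma x <> sigma y /\ forall y' C, C \in HH ->
  sigma y' = sigma y -> x \in C -> y' \in C -> y \in C.
Proof.
move=> exy; have sxy := prop exy; split=> // y' C /inHE CH sy.
case: CH => [->|[[w ->]|[[w ->]|[[w ->]|->]]]].
- by rewrite inE.
- by rewrite !inE => /eqP a /eqP b; case: sxy; rewrite -sy a b.
- by rewrite !inE => c _; apply: connect_edge c exy.
- rewrite !inE => /andP[_ /eqP a] /andP[_ /eqP b].
  by case: sxy; rewrite -sy a b.
- rewrite !inE => /orP[c|/andP[/forallP iso _]] _.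
    by rewrite (connect_edge c exy).
  by move: (iso y); rewrite exy.
Qed.

Lemma edge_bm x y :
  (sigma x <> sigma y /\ forall y' C, C \in HH ->
    sigma y' = sigma y -> x \in C -> y' \in C -> y \in C) ->
  (sigma y <> sigma x /\ forall x' C, C \in HH ->
    sigma x' = sigma x -> y \in C -> x' \in C -> x \in C) -> e x y.
Proof.
move=> [sxy b1] [syx b2].
have tc := two_col col2.
case: (boolP (isol e x)) => [isx|/not_isol [w exw]].
  case: (boolP (isol e y)) => [isy|/not_isol [w eyw]].
    have x0n : ~~ isol e x0 by apply/forallPn; exists y0; rewrite negbK.
    have s0 : sigma x0 <> sigma y0 by apply: prop.
    case: (tc x y x0 sxy) => E.
    - case: (tc x y y0 sxy) => E2; first by case: s0; rewrite E E2.
      have := b1 y0 MM hHM E2; rewrite !inE isx E eqxx orbT connect1 //.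
      move=> /(_ isT isT) /orP[c|/andP[_ /eqP E3]].
        have E4 : x0 = y by apply: (isol_connect isy); rewrite (csym esym).
        by move: x0n; rewrite E4 isy.
      by case: sxy; rewrite ?E3 ?E.
    - case: (tc y x y0 syx) => E2; first by case: s0; rewrite E E2.
      have := b2 y0 MM hHM E2; rewrite !inE isy E eqxx orbT connect1 //.
      move=> /(_ isT isT) /orP[c|/andP[_ /eqP E3]].
        have E4 : x0 = x by apply: (isol_connect isx); rewrite (csym esym).
        by move: x0n; rewrite E4 isx.
      by case: syx; rewrite ?E3 ?E.
  case: (tc y x w syx) => E; first by case: (prop eyw).
  have := b2 w (ccomp e y) (hHC y) E (in_comp y); rewrite !inE connect1 //.
  move=> /(_ isT) c; rewrite esym; apply: (Lconn esym col2 prop hQ) => //.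
case: (tc x y w sxy) => E; first by case: (prop exw).
have := b1 w (ccomp e x) (hHC x) E (in_comp x); rewrite !inE connect1 //.
by move=> /(_ isT) c; apply: (Lconn esym col2 prop hQ).
Qed.

Definition HTree := hptree hHT hH1.

Lemma cons_rbmg : RBMG e sigma.
Proof.
split=> //; exists HTree; split; first exact: (hphylo hHT hH1 hH0 lamH).
move=> x y; split.
  move=> exy; split; apply/(hbmP hHT hH1 hH0 lamH); apply: bm_edge => //.
  by rewrite esym.
case=> /(hbmP hHT hH1 hH0 lamH) b1 /(hbmP hHT hH1 hH0 lamH) b2.
exact: edge_bm.
Qed.

Definition tp (C : {set V}) : bool := [exists u, (C == ccomp e u) && [exists v, e u v]].

Lemma cons_orth : orthology_graph e.
Proof.
exists HTree, (fun z => tp (val z)); split; first exact: (hphylo hHT hH1 hH0 lamH).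
move=> x y nxy; split.
  move=> exy z /(hlcaP hHT hH1 hH0 lamH) [xz yz zm].
  have sxy := prop exy.
  have yC : y \in ccomp e x by rewrite inE connect1.
  have sub := zm _ (hHC x) (in_comp x) yC.
  suff E : val z = ccomp e x.
    by apply/existsP; exists x; rewrite E eqxx /=; apply/existsP; exists y.
  apply/eqP; rewrite eqEsubset sub andTb.
  case/inHE: (valP z) => [->|[[w E]|[[w E]|[[w E]|E]]]]; first exact: subsetT.
  - rewrite E !inE in xz yz; case: nxy; by rewrite (eqP xz) (eqP yz).
  - rewrite E in xz *; rewrite inE in xz; by rewrite (comp_eq esym xz) subxx.
  - rewrite E !inE in xz yz; case/andP: xz => _ /eqP a; case/andP: yz => _ /eqP b.
    by case: sxy; rewrite a b.
  - rewrite E in xz *; move: xz; rewrite !inE => /orP[c|/andP[/forallP iso _]].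
      by rewrite -(comp_eq esym c) subsetUl.
    by move: (iso y); rewrite exy.
move=> h.
have [z lz] := hlca_ex hHT hH1 hH0 lamH x y.
have /existsP [u /andP[/eqP zu /existsP [v euv]]] := h z lz.
case/(hlcaP hHT hH1 hH0 lamH): lz => xz yz zm.
rewrite zu !inE in xz yz.
have cxy : connect e x y by apply: connect_trans yz; rewrite (csym esym).
case: (eqVneq (sigma x) (sigma y)) => [E|NE]; last by apply: (Lconn esym col2 prop hQ) => //; apply/eqP.
have := zm _ (hHP x) (in_P x); rewrite !inE cxy E eqxx => /(_ isT).
rewrite zu => sub.
have uP := subsetP sub u (in_comp u).
have vC : v \in ccomp e u by rewrite inE connect1.
have vP := subsetP sub v vC.
move: uP vP; rewrite !inE => /andP[_ /eqP a] /andP[_ /eqP b].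
by case: (prop euv); rewrite a b.
Qed.

End Cons.

Theorem mainTheorem2 (V S : finType) (e : rel V) (sigma : V -> S) :
  symmetric e -> irreflexive e ->
  (forall s : S, exists x : V, sigma x = s) ->
  ncolors sigma = 2 ->
  [/\ nRBMG 2 e sigma <->
        [/\ properly_colored e sigma, bicluster e & exists x y, e x y],
      nRBMG 2 e sigma <-> nRBMG 2 e sigma /\ orthology_graph e &
      nRBMG 2 e sigma <-> n_hc_cograph 2 e sigma].
Proof.
move=> esym eirr _ col2.
have toP : nRBMG 2 e sigma ->
    [/\ properly_colored e sigma, Qp e & exists x y, e x y].
  case=> R _; have [Q ed] := rbmg_PQ col2 R; by case: R.
have fromP : forall x0 y0, properly_colored e sigma -> Qp e -> e x0 y0 -> nRBMG 2 e sigma.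
  move=> x0 y0 prop hQ exy; split=> //; exact: (cons_rbmg esym col2 prop hQ exy).
split.
- split.
    by case/toP => prop hQ ed; split=> //; exact: (bic_of_Q esym col2 prop hQ).
  case=> prop bic [x [y exy]]; exact: (fromP x y prop (Q_of_bic eirr bic) exy).
- split; last by move=> [h _].
  move=> R; split=> //; case/toP: R => prop hQ [x [y exy]].
  exact: (cons_orth esym col2 prop hQ x).
- split.
    case/toP => prop hQ [x [y exy]]; split=> //.
    apply: (closed_hc esym col2 prop hQ exy); last exact: subsetT.
    by move=> u v; rewrite !inE.
  case=> hcT _.
  have [h1 h2 h3] := hc_inv esym eirr col2 hcT.
  have prop : properly_colored e sigma.
    by move=> x y exy; apply: h1; rewrite ?inE.
  have hQ : Qp e by move=> x y z w; apply: h2; rewrite inE.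
  have ex : exists x y, [/\ x \in [set: V], y \in [set: V] & e x y].
    by apply: h3; rewrite -colsE; move: col2; rewrite /ncolors => ->.
  case: ex => x [y [_ _ exy]].
  exact: (fromP x y prop hQ exy).
Qed.
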